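(* In the two-source game ($m=2$) with $n_1\ge n_2$ and $n=n_1+n_2$, if $n_1\bar q<q\mu/\phi+n_2+\bar q$ and $q>\frac{2}{n}$, then the unique (pure) Nash equilibrium is the profile in which all users choose the direct path, i.e., $u_1=n_1$, $u_2=n_2$.
   Context: Two-source network: sources $s_1,s_2$ and destination $d$; source $s_i$ has a set $N_i$ of $n_i$ users. Each user generates an independent Poisson flow of packets of rate $\phi>0$; each direct link $(s_i,d)$ has service rate $\mu>0$; the sidelink between $s_1$ and $s_2$ loses packets independently with probability $q\in[0,1]$, and $\bar q=1-q$. Only pure strategies: a user of $N_1$ chooses DP $(s_1,d)$ or IP $(s_1,s_2,d)$; a user of $N_2$ chooses DP $(s_2,d)$ or IP $(s_2,s_1,d)$. With $u_i$ users of $N_i$ on DP, $T_1=u_1\phi+(n_2-u_2)\bar q\phi$, $T_2=u_2\phi+(n_1-u_1)\bar q\phi$. The loss rate of a user of $N_i$ is $\phi\frac{T_i}{T_i+\mu}$ on DP and $\phi\left(q+\bar q\frac{T_j}{T_j+\mu}\right)$ on IP to $s_j$. A Nash equilibrium is a pure profile in which no user can strictly decrease its loss rate by unilaterally switching its route. *)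

(* Defs.v *)
From mathcomp Require Import all_boot all_order all_algebra.
Set Implicit Arguments. Unset Strict Implicit. Unset Printing Implicit Defensive.
Import Order.TTheory GRing.Theory Num.Theory.
Local Open Scope ring_scope.

(* Users of N_i are indexed by 'I_n_i; a pure profile for
   source i is s_i : {ffun 'I_n_i -> bool}, where true = direct path (DP),
   false = indirect path (IP) via the other source. *)

Section TwoSource.
Variables (R : realFieldType) (n1 n2 : nat) (phi mu q : R).

Definition qbar : R := 1 - q.

Definition ndp (n : nat) (s : {ffun 'I_n -> bool}) : nat := #|[set i | s i]|.

Definition T1 (s1 : {ffun 'I_n1 -> bool}) (s2 : {ffun 'I_n2 -> bool}) : R :=
  (ndp s1)%:R * phi + (n2 - ndp s2)%:R * qbar * phi.
Definition T2 (s1 : {ffun 'I_n1 -> bool}) (s2 : {ffun 'I_n2 -> bool}) : R :=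
  (ndp s2)%:R * phi + (n1 - ndp s1)%:R * qbar * phi.

Definition loss_dp (T : R) : R := phi * (T / (T + mu)).
Definition loss_ip (T' : R) : R := phi * (q + qbar * (T' / (T' + mu))).

Definition loss1 (s1 : {ffun 'I_n1 -> bool}) (s2 : {ffun 'I_n2 -> bool})
  (i : 'I_n1) : R :=
  if s1 i then loss_dp (T1 s1 s2) else loss_ip (T2 s1 s2).
Definition loss2 (s1 : {ffun 'I_n1 -> bool}) (s2 : {ffun 'I_n2 -> bool})
  (i : 'I_n2) : R :=
  if s2 i then loss_dp (T2 s1 s2) else loss_ip (T1 s1 s2).

Definition upd (n : nat) (s : {ffun 'I_n -> bool}) (i : 'I_n) (b : bool)
  : {ffun 'I_n -> bool} := [ffun j => if j == i then b else s j].

Definition is_NE (s1 : {ffun 'I_n1 -> bool}) (s2 : {ffun 'I_n2 -> bool}) : Prop :=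
  (forall (i : 'I_n1) (b : bool), ~ (loss1 (upd s1 i b) s2 i < loss1 s1 s2 i)) /\
  (forall (i : 'I_n2) (b : bool), ~ (loss2 s1 (upd s2 i b) i < loss2 s1 s2 i)).

End TwoSource.

(* Main.v *)
Require Import Defs.
From mathcomp Require Import all_boot all_order all_algebra.
From mathcomp Require Import ring lra.
Import Order.TTheory GRing.Theory Num.Theory.
Local Open Scope ring_scope.

Lemma ndp_le n (s : {ffun 'I_n -> bool}) : (ndp s <= n)%N.
Proof. by rewrite /ndp; apply: leq_trans (max_card _) _; rewrite card_ord. Qed.

Lemma ndp_upd_true n (s : {ffun 'I_n -> bool}) i :
  s i = false -> ndp (upd s i true) = (ndp s).+1.
Proof.
rewrite /ndp => si.
have -> : [set j | upd s i true j] = i |: [set j | s j].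
  by apply/setP => j; rewrite !inE /upd ffunE; case: eqP.
by rewrite cardsU1 inE si.
Qed.

Lemma ndp_upd_false n (s : {ffun 'I_n -> bool}) i :
  s i = true -> ndp s = (ndp (upd s i false)).+1.
Proof.
rewrite /ndp => si.
have -> : [set j | s j] = i |: [set j | upd s i false j].
  by apply/setP => j; rewrite !inE /upd ffunE; case: eqP => [->|].
by rewrite cardsU1 inE ffunE eqxx.
Qed.

Lemma upd_same n (s : {ffun 'I_n -> bool}) i : upd s i (s i) = s.
Proof. by apply/ffunP => j; rewrite ffunE; case: eqP => [->|]. Qed.

Lemma ndp_all n (s : {ffun 'I_n -> bool}) : (forall i, s i) -> ndp s = n.
Proof.
move=> h; rewrite /ndp.
have -> : [set j | s j] = setT by apply/setP => j; rewrite !inE h.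
by rewrite cardsT card_ord.
Qed.

Lemma ndp_lt n (s : {ffun 'I_n -> bool}) i : s i = false -> (ndp s < n)%N.
Proof. by move=> si; have := @ndp_le _ (upd s i true); rewrite ndp_upd_true. Qed.

Lemma T1E (R : realFieldType) n1 n2 (phi q : R) s1 s2 :
  @T1 R n1 n2 phi q s1 s2 = (ndp s1)%:R * phi + (n2%:R - (ndp s2)%:R) * qbar q * phi.
Proof. by rewrite /T1 natrB // ndp_le. Qed.

Lemma T2E (R : realFieldType) n1 n2 (phi q : R) s1 s2 :
  @T2 R n1 n2 phi q s1 s2 = (ndp s2)%:R * phi + (n1%:R - (ndp s1)%:R) * qbar q * phi.
Proof. by rewrite /T2 natrB // ndp_le. Qed.

Lemma lossE (R : realFieldType) (phi mu q A B : R) : A + mu != 0 -> B + mu != 0 ->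
  loss_dp phi mu A - loss_ip phi mu q B =
  (phi * mu) * (qbar q * (A + mu) - (B + mu)) / ((A + mu) * (B + mu)).
Proof.
move=> hA hB; rewrite /loss_dp /loss_ip /qbar.
have -> : A / (A + mu) = 1 - mu / (A + mu) by field.
have -> : B / (B + mu) = 1 - mu / (B + mu) by field.
field; apply/andP; split => //.
Qed.

Lemma keyB (R : realFieldType) (phi mu q A B : R) : 0 < phi -> 0 < mu ->
  0 < A + mu -> 0 < B + mu ->
  (loss_ip phi mu q B < loss_dp phi mu A) = (B + mu < qbar q * (A + mu)).
Proof.
move=> hp hm hA hB.
have hD : 0 < ((A + mu) * (B + mu))^-1 by rewrite invr_gt0 mulr_gt0.
rewrite -subr_gt0 lossE ?lt0r_neq0 // -mulrA (pmulr_rgt0 _ (mulr_gt0 hp hm)).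
by rewrite (pmulr_lgt0 _ hD) subr_gt0.
Qed.

Lemma keyA (R : realFieldType) (phi mu q A B : R) : 0 < phi -> 0 < mu ->
  0 < A + mu -> 0 < B + mu ->
  (loss_dp phi mu A < loss_ip phi mu q B) = (qbar q * (A + mu) < B + mu).
Proof.
move=> hp hm hA hB.
have hD : 0 < ((A + mu) * (B + mu))^-1 by rewrite invr_gt0 mulr_gt0.
rewrite -subr_lt0 lossE ?lt0r_neq0 // -mulrA (pmulr_rlt0 _ (mulr_gt0 hp hm)).
by rewrite (pmulr_llt0 _ hD) subr_lt0.
Qed.

Lemma T1ge0 (R : realFieldType) n1 n2 (phi q : R) s1 s2 : 0 < phi -> 0 <= qbar q ->
  0 <= @T1 R n1 n2 phi q s1 s2.
Proof. move=> hp hq; rewrite /T1; apply: addr_ge0; first by apply: mulr_ge0 => //; exact: ltW.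
by apply: mulr_ge0; [apply: mulr_ge0|exact: ltW]. Qed.
Lemma T2ge0 (R : realFieldType) n1 n2 (phi q : R) s1 s2 : 0 < phi -> 0 <= qbar q ->
  0 <= @T2 R n1 n2 phi q s1 s2.
Proof. move=> hp hq; rewrite /T2; apply: addr_ge0; first by apply: mulr_ge0 => //; exact: ltW.
by apply: mulr_ge0; [apply: mulr_ge0|exact: ltW]. Qed.

Section Dev.
Lemma dev1_up (R : realFieldType) n1 n2 (phi mu q : R) (s1 : {ffun 'I_n1 -> bool})
  (s2 : {ffun 'I_n2 -> bool}) i : 0 < phi -> 0 < mu -> 0 <= qbar q -> s1 i = false ->
  (loss1 phi mu q (upd s1 i true) s2 i < loss1 phi mu q s1 s2 i) =
  (qbar q * (T1 phi q s1 s2 + phi + mu) < T2 phi q s1 s2 + mu).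
Proof.
move=> hp hm hq si.
have ui : upd s1 i true i = true by rewrite ffunE eqxx.
have -> : T1 phi q s1 s2 + phi = T1 phi q (upd s1 i true) s2.
  by rewrite !T1E ndp_upd_true // -addn1 natrD; ring.
rewrite /loss1 ui si keyA //.
  by apply: ltr_wpDl; [apply: T1ge0|].
by apply: ltr_wpDl; [apply: T2ge0|].
Qed.

Lemma dev1_down (R : realFieldType) n1 n2 (phi mu q : R) (s1 : {ffun 'I_n1 -> bool})
  (s2 : {ffun 'I_n2 -> bool}) i : 0 < phi -> 0 < mu -> 0 <= qbar q -> s1 i = true ->
  (loss1 phi mu q (upd s1 i false) s2 i < loss1 phi mu q s1 s2 i) =
  (T2 phi q s1 s2 + qbar q * phi + mu < qbar q * (T1 phi q s1 s2 + mu)).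
Proof.
move=> hp hm hq si.
have ui : upd s1 i false i = false by rewrite ffunE eqxx.
have -> : T2 phi q s1 s2 + qbar q * phi = T2 phi q (upd s1 i false) s2.
  by rewrite !T2E (@ndp_upd_false _ _ _ si) -addn1 natrD; ring.
rewrite /loss1 ui si keyB //.
  by apply: ltr_wpDl; [apply: T1ge0|].
by apply: ltr_wpDl; [apply: T2ge0|].
Qed.

Lemma dev2_up (R : realFieldType) n1 n2 (phi mu q : R) (s1 : {ffun 'I_n1 -> bool})
  (s2 : {ffun 'I_n2 -> bool}) i : 0 < phi -> 0 < mu -> 0 <= qbar q -> s2 i = false ->
  (loss2 phi mu q s1 (upd s2 i true) i < loss2 phi mu q s1 s2 i) =
  (qbar q * (T2 phi q s1 s2 + phi + mu) < T1 phi q s1 s2 + mu).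
Proof.
move=> hp hm hq si.
have ui : upd s2 i true i = true by rewrite ffunE eqxx.
have -> : T2 phi q s1 s2 + phi = T2 phi q s1 (upd s2 i true).
  by rewrite !T2E ndp_upd_true // -addn1 natrD; ring.
rewrite /loss2 ui si keyA //.
  by apply: ltr_wpDl; [apply: T2ge0|].
by apply: ltr_wpDl; [apply: T1ge0|].
Qed.

Lemma dev2_down (R : realFieldType) n1 n2 (phi mu q : R) (s1 : {ffun 'I_n1 -> bool})
  (s2 : {ffun 'I_n2 -> bool}) i : 0 < phi -> 0 < mu -> 0 <= qbar q -> s2 i = true ->
  (loss2 phi mu q s1 (upd s2 i false) i < loss2 phi mu q s1 s2 i) =
  (T1 phi q s1 s2 + qbar q * phi + mu < qbar q * (T2 phi q s1 s2 + mu)).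
Proof.
move=> hp hm hq si.
have ui : upd s2 i false i = false by rewrite ffunE eqxx.
have -> : T1 phi q s1 s2 + qbar q * phi = T1 phi q s1 (upd s2 i false).
  by rewrite !T1E (@ndp_upd_false _ _ _ si) -addn1 natrD; ring.
rewrite /loss2 ui si keyB //.
  by apply: ltr_wpDl; [apply: T2ge0|].
by apply: ltr_wpDl; [apply: T1ge0|].
Qed.
End Dev.

Theorem corollary4 (R : realFieldType) (n1 n2 : nat) (phi mu q : R) :
  0 < phi -> 0 < mu -> 0 <= q <= 1 ->
  (n2 <= n1)%N ->
  n1%:R * qbar q < q * mu / phi + n2%:R + qbar q ->
  2 / (n1 + n2)%:R < q ->
  forall (s1 : {ffun 'I_n1 -> bool}) (s2 : {ffun 'I_n2 -> bool}),
    is_NE phi mu q s1 s2 <-> ((forall i, s1 i) /\ (forall i, s2 i)).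
Proof.
move=> hp hm /andP[q0 q1] hn hq1 hq2 s1 s2.
have qb0 : 0 <= qbar q by rewrite /qbar subr_ge0.
have H1 : n1%:R * qbar q * phi < q * mu + n2%:R * phi + qbar q * phi.
  by move: hq1; rewrite -(ltr_pM2r hp) !mulrDl divfK ?gt_eqF.
have hN : n2%:R <= n1%:R :> R by rewrite ler_nat.
have qpos : 0 < q by apply: le_lt_trans hq2; rewrite divr_ge0 ?ler0n.
have qmu : 0 < q * mu by rewrite mulr_gt0.
have qbp : 0 <= qbar q * phi by rewrite mulr_ge0 // ltW.
have a0 : 0 <= (ndp s1)%:R :> R by rewrite ler0n.
have b0 : 0 <= (ndp s2)%:R :> R by rewrite ler0n.
have aN : (ndp s1)%:R <= n1%:R :> R by rewrite ler_nat ndp_le.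
have bN : (ndp s2)%:R <= n2%:R :> R by rewrite ler_nat ndp_le.
have n2q : 0 <= n2%:R * q * phi by rewrite !mulr_ge0 ?ler0n // ltW.
have n12 : 0 <= (n1%:R - n2%:R) * phi by rewrite mulr_ge0 ?subr_ge0 // ltW.
split.
- move=> [h1 h2].
  have mixed : forall i j, s1 i = false -> s2 j = false -> False.
    move=> i j si sj.
    have h := h1 i true; rewrite dev1_up // in h; move/negP: h; rewrite -leNgt => h.
    have h' := h2 j true; rewrite dev2_up // in h'; move/negP: h'; rewrite -leNgt => h'.
    have nq : 2 < q * (n1 + n2)%:R.
      have np : 0 < (n1 + n2)%:R :> R.
        by rewrite ltr0n addn_gt0 (leq_trans _ (@ndp_lt _ _ _ si)).
      by move: hq2; rewrite ltr_pdivrMr.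
    have F1 : 0 <= q * (((ndp s1)%:R + (ndp s2)%:R) * q * phi).
      by rewrite !mulr_ge0 ?addr_ge0 // ?ltW.
    have F2 : 0 <= (q * (n1 + n2)%:R - 2) * (qbar q * phi).
      by rewrite mulr_ge0 // subr_ge0 ltW.
    move: h h' F1 F2 qmu; rewrite !T1E !T2E natrD /qbar => h h' F1 F2 F3.
    lra.
  split.
  + move=> i; case si: (s1 i) => //; exfalso.
    case E: [forall j, s2 j].
    * move/forallP: E => all2.
      have h := h1 i true; rewrite dev1_up // in h; move/negP: h; rewrite -leNgt => h.
      have lt := @ndp_lt _ _ _ si.
      have k1 : (ndp s1)%:R + 1 <= n1%:R :> R by rewrite natr1 ler_nat.
      have F : 0 <= (n1%:R - (ndp s1)%:R - 1) * (qbar q * phi).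
        by apply: mulr_ge0 => //; lra.
      move: h F H1; rewrite !T1E !T2E (@ndp_all _ _ all2) /qbar => h F G.
      lra.
    * move/negbT/forallPn: E => [j /negbTE sj]; exact: mixed si sj.
  + move=> j; case sj: (s2 j) => //; exfalso.
    case E: [forall i, s1 i].
    * move/forallP: E => all1.
      have h := h2 j true; rewrite dev2_up // in h; move/negP: h; rewrite -leNgt => h.
      have lt := @ndp_lt _ _ _ sj.
      have k1 : (ndp s2)%:R + 1 <= n2%:R :> R by rewrite natr1 ler_nat.
      have F : 0 <= (n2%:R - (ndp s2)%:R - 1) * (qbar q * phi).
        by apply: mulr_ge0 => //; lra.
      move: h F n2q n12 qmu qbp; rewrite !T1E !T2E (@ndp_all _ _ all1) /qbar => h F G1 G2 G3 G4.
      lra.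
    * move/negbT/forallPn: E => [i /negbTE si]; exact: mixed si sj.
- move=> [a1 a2]; have e1 := @ndp_all _ _ a1; have e2 := @ndp_all _ _ a2.
  split => i b.
  + have si : s1 i = true := a1 i.
    case: b.
      by have := @upd_same _ s1 i; rewrite si => ->; rewrite ltxx.
    rewrite dev1_down //; apply/negP; rewrite -leNgt.
    move: H1 qmu; rewrite !T1E !T2E e1 e2 /qbar => G1 G2.
    lra.
  + have si : s2 i = true := a2 i.
    case: b.
      by have := @upd_same _ s2 i; rewrite si => ->; rewrite ltxx.
    rewrite dev2_down //; apply/negP; rewrite -leNgt.
    move: n2q n12 qmu qbp; rewrite !T1E !T2E e1 e2 /qbar => G1 G2 G3 G4.
    lra.
Qed.
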